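(* Let $R$ be a noetherian ring over a field $k$ and let $\mathcal{J}_1,\mathcal{J}_2\subset \mathrm{Gr}_{\mathbb{Q}}(R)$ be two $\mathbb{Q}$-Rees algebras over $R$. The following are equivalent: (1) $\mathcal{J}_1$ and $\mathcal{J}_2$ are equivalent, i.e. the Rees algebras $\mathcal{J}_1\cap R[T]$ and $\mathcal{J}_2\cap R[T]$ have the same integral closure in $R[T]$; (2) for some $b\in\mathbb{Q}_{>0}$, the algebras $\mathcal{J}_1\cap R[T^{b}]$ and $\mathcal{J}_2\cap R[T^{b}]$ have the same integral closure in $R[T^{b}]$; (3) for every $b\in\mathbb{Q}_{>0}$, the algebras $\mathcal{J}_1\cap R[T^{b}]$ and $\mathcal{J}_2\cap R[T^{b}]$ have the same integral closure in $R[T^{b}]$.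
   Context: Let $\mathbb{Q}_{\geq 0}$ be the nonnegative rationals and $\mathrm{Gr}_{\mathbb{Q}}(R)=\bigoplus_{a\in\mathbb{Q}_{\geq0}}RT^{a}$ (so $\mathrm{Gr}_{\mathbb{Q}}(R)=\bigcup_{N\ge1}R[T^{1/N}]$). A $\mathbb{Q}$-Rees algebra over $R$ is a graded subalgebra $\mathcal{J}=\bigoplus_{a\in\mathbb{Q}_{\ge0}}J_aT^a\subset \mathrm{Gr}_{\mathbb{Q}}(R)$, where the $J_a$ are ideals of $R$, such that: $J_0=R$; $J_aJ_b\subset J_{a+b}$ for all $a,b$; $J_b\subset J_a$ whenever $a\le b$; and there exist $f_1,\dots,f_r\in R$ and $a_1,\dots,a_r\in\mathbb{Q}_{\ge0}$ with $f_i\in J_{a_i}$ such that for every $a\in\mathbb{Q}_{\ge0}$ the ideal $J_a$ is generated by $\{f_{i_1}\cdots f_{i_\ell}\mid a_{i_1}+\dots+a_{i_\ell}\ge a\}$. *)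

(* Defs.v *)
From HB Require Import structures.
From mathcomp Require Import all_boot all_order all_algebra.
Set Implicit Arguments. Unset Strict Implicit. Unset Printing Implicit Defensive.
Import Order.TTheory GRing.Theory Num.Theory.
Local Open Scope ring_scope.

Section Defs.
Variable R : comNzRingType.

Definition ideal_gen (G : R -> Prop) (x : R) : Prop :=
  exists l : seq (R * R), (forall p, p \in l -> G p.2) /\
    x = \sum_(p <- l) p.1 * p.2.

Definition is_ideal (I : R -> Prop) : Prop :=
  [/\ I 0, (forall x y, I x -> I y -> I (x + y)) & (forall r x, I x -> I (r * x))].

Definition noetherian : Prop :=
  forall I : R -> Prop, is_ideal I ->
    exists s : seq R, forall x, I x <-> ideal_gen (fun g => g \in s) x.

(* A Q-Rees algebra  \bigoplus_{a in Q>=0} J_a T^a ; J a is only meaningful for a >= 0. *)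
Definition QRees (J : rat -> R -> Prop) : Prop :=
  [/\ (forall a, 0 <= a -> is_ideal (J a)),
      (forall x, J 0 x),
      (forall a b x y, 0 <= a -> 0 <= b -> J a x -> J b y -> J (a + b) (x * y)),
      (forall a b x, 0 <= a -> a <= b -> J b x -> J a x) &
      exists (r : nat) (f : 'I_r -> R) (e : 'I_r -> rat),
        [/\ (forall i, 0 <= e i), (forall i, J (e i) (f i)) &
            forall a, 0 <= a -> forall x, J a x <->
              ideal_gen (fun g => exists s : seq 'I_r,
                           a <= \sum_(i <- s) e i /\ g = \prod_(i <- s) f i) x]].

(* J ∩ R[T^b], viewed inside R[T^b] ≅ {poly R} via T^b |-> 'X:
   the polynomials  sum_n p_n X^n  with p_n in J_{n b}. *)
Definition Rees_slice (J : rat -> R -> Prop) (b : rat) (p : {poly R}) : Prop :=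
  forall n : nat, J (n%:R * b) p`_n.

Definition integral_over (S : {poly R} -> Prop) (q : {poly R}) : Prop :=
  exists P : {poly {poly R}}, P \is monic /\ (forall i, S P`_i) /\ P.[q] = 0.

Definition same_closure_at (J1 J2 : rat -> R -> Prop) (b : rat) : Prop :=
  forall q : {poly R},
    integral_over (Rees_slice J1 b) q <-> integral_over (Rees_slice J2 b) q.

Definition QRees_equiv (J1 J2 : rat -> R -> Prop) : Prop :=
  same_closure_at J1 J2 1.

End Defs.

(* Main.v *)
Require Import Defs.
From HB Require Import structures.
From mathcomp Require Import all_boot all_order all_algebra.
From Stdlib Require Import ClassicalDescription.
Import Order.TTheory GRing.Theory Num.Theory.
From mathcomp Require Import ring.
Set Implicit Arguments. Unset Strict Implicit. Unset Printing Implicit Defensive.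
Local Open Scope ring_scope.

Section Int.
Variable K : comNzRingType.

Definition intP (S : K -> Prop) (x : K) :=
  exists P : {poly K}, P \is monic /\ (forall i, S P`_i) /\ P.[x] = 0.

Definition subringP (S : K -> Prop) :=
  [/\ S 1, (forall x y, S x -> S y -> S (x - y)) & (forall x y, S x -> S y -> S (x * y))].

Section Sub.
Variables (S : K -> Prop) (hS : subringP S).

Definition Sb (x : K) : bool := if excluded_middle_informative (S x) then true else false.
Lemma SbP x : Sb x <-> S x.
Proof. by rewrite /Sb; case: excluded_middle_informative. Qed.

Definition SbP' : {pred K} := Sb.

Fact Sb_closed : subring_closed SbP'.
Proof.
case: hS => h1 hB hM; split.
- exact/SbP.
- by move=> x y /SbP hx /SbP hy; apply/SbP; apply: hB.
- by move=> x y /SbP hx /SbP hy; apply/SbP; apply: hM.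
Qed.

HB.instance Definition _ := GRing.isSubringClosed.Build K SbP' Sb_closed.

Definition ST := {x : K | x \in SbP'}.
HB.instance Definition _ := [isSub of ST for @sval K (fun x => x \in SbP')].
HB.instance Definition _ := [Choice of ST by <:].
HB.instance Definition _ := [SubChoice_isSubComNzRing of ST by <:].

Definition STval : {rmorphism ST -> K} := val.


Lemma intP_val x : intP S x <-> integralOver STval x.
Proof.
split.
- case=> P [mP [SP Px0]].
  pose Q0 := \poly_(i < size P) (insubd (1 : ST) P`_i).
  have eP : map_poly STval Q0 = P.
    apply/polyP=> i; rewrite coef_map coef_poly.
    case: ltnP => hi /=; last by rewrite nth_default.
    by rewrite insubdK //; apply/SbP.
  exists Q0; last by rewrite /root eP Px0.
  have inj : injective STval by apply: val_inj.
  rewrite monicE -(inj_eq inj) -(lead_coef_map_inj inj) ?eP ?rmorph1 ?(monicP mP) //.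
  all: try by rewrite rmorph0.
  all: try by [].
- case=> p mp rp; exists (map_poly STval p); split; first exact: monic_map.
  split; last exact/eqP.
  by move=> i; rewrite coef_map; apply/SbP; apply: (valP (p`_i)).
Qed.

Lemma intP_S y : S y -> intP S y.
Proof.
move=> Sy; apply/intP_val.
have -> : y = STval (insubd (1 : ST) y) by rewrite /= insubdK //; apply/SbP.
exact: integral_id.
Qed.

Lemma intP_add x y : intP S x -> intP S y -> intP S (x + y).
Proof. by move=> /intP_val hx /intP_val hy; apply/intP_val; apply: integral_add. Qed.

Lemma intP_0 : intP S 0.
Proof. apply/intP_val; exact: integral0. Qed.

Lemma intP_trans (S1 : K -> Prop) q :
  intP S1 q -> (forall y, S1 y -> intP S y) -> intP S q.
Proof.
case=> P [mP [SP P0]] h; apply/intP_val.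
apply: (integral_root_monic mP); first by rewrite /root P0.
move=> z /(nthP 0) [i _ <-]; apply/intP_val; exact: h.
Qed.

End Sub.
End Int.

Section Rees.
Variable R : comNzRingType.
Variable J : rat -> R -> Prop.
Hypothesis hJ : QRees J.

Lemma J_ideal a : 0 <= a -> is_ideal (J a).
Proof. by move: hJ; rewrite /QRees; case=> h _ _ _ _; apply: h. Qed.
Lemma J_0 a : 0 <= a -> J a 0.
Proof. by move=> /J_ideal []. Qed.
Lemma J_add a x y : 0 <= a -> J a x -> J a y -> J a (x + y).
Proof. by move=> /J_ideal [] _ h _; apply: h. Qed.
Lemma J_mulL a r x : 0 <= a -> J a x -> J a (r * x).
Proof. by move=> /J_ideal [] _ _ h; apply: h. Qed.
Lemma J_opp a x : 0 <= a -> J a x -> J a (- x).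
Proof. by move=> ha hx; rewrite -mulN1r; apply: J_mulL. Qed.
Lemma J_mul a b x y : 0 <= a -> 0 <= b -> J a x -> J b y -> J (a + b) (x * y).
Proof. by move: hJ; rewrite /QRees; case=> _ _ h _ _; apply: h. Qed.
Lemma J_any x : J 0 x.
Proof. by move: hJ; rewrite /QRees; case=> _ h _ _ _; apply: h. Qed.

Lemma J_exp a x n : 0 <= a -> J a x -> J (n%:R * a) (x ^+ n).
Proof.
move=> ha hx; elim: n => [|n IH]; first by rewrite mul0r; apply: J_any.
have -> : (n.+1)%:R * a = a + n%:R * a by rewrite -addn1 natrD mulrDl mul1r addrC.
rewrite exprS; apply: J_mul => //; apply: mulr_ge0 => //; exact: ler0n.
Qed.

Lemma J_sum a I (r : seq I) (P : pred I) (F : I -> R) :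
  0 <= a -> (forall i, P i -> J a (F i)) -> J a (\sum_(i <- r | P i) F i).
Proof.
move=> ha h; apply: (big_ind (J a)) => //; first exact: J_0.
by move=> x y; apply: J_add.
Qed.

Lemma slice_subring c : 0 <= c -> subringP (Rees_slice J c).
Proof.
move=> hc; have hn n : 0 <= n%:R * c by apply: mulr_ge0 => //; exact: ler0n.
split.
- move=> n; rewrite coefC; case: n => [|n] /=; first by rewrite mul0r; apply: J_any.
  exact: J_0.
- move=> x y hx hy n; rewrite coefB; apply: J_add => //; apply: J_opp => //.
- move=> x y hx hy n; rewrite coefM; apply: J_sum => // [[i /= hi]] _.
  have -> : n%:R * c = i%:R * c + (n - i)%N%:R * c.
    by rewrite -mulrDl -natrD subnKC // -ltnS.
  by apply: J_mul.
Qed.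


Lemma subringP_XnC (K : comNzRingType) (S : K -> Prop) a m :
  subringP S -> S a -> (0 < m)%N -> forall i, S ('X^m - a%:P)`_i.
Proof.
move=> [h1 hB hM] ha hm i; have h0 : S 0 by rewrite -(subrr 1); apply: hB.
rewrite coefB coefXn coefC.
case: eqP => [->|_]; case: eqP => [him|_] //=.
- by rewrite him in hm.
- by rewrite subr0.
- by rewrite sub0r -(sub0r a); apply: hB.
- by rewrite subr0.
Qed.

Lemma slice_Phi c m s : (0 < m)%N -> 0 <= c ->
  Rees_slice J (m%:R * c) s -> Rees_slice J c (s \Po 'X^m).
Proof.
move=> hm hc hs n; rewrite coef_comp_poly_Xn //.
case: ifP => [/dvdnP [k ->]|_]; last by apply: J_0; apply: mulr_ge0 => //; exact: ler0n.
by rewrite mulnK // natrM -mulrA; apply: hs.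
Qed.

Definition PhiS c m (y : {poly R}) :=
  exists s, Rees_slice J (m%:R * c) s /\ y = s \Po 'X^m.

Lemma PhiS_subring c m : 0 <= c -> subringP (PhiS c m).
Proof.
move=> hc; have hmc : 0 <= m%:R * c by apply: mulr_ge0 => //; exact: ler0n.
have [s1 sB sM] := slice_subring hmc.
split.
- by exists 1; split => //; rewrite -polyC1 comp_polyC.
- move=> _ _ [x [hx ->]] [y [hy ->]]; exists (x - y); split; first exact: sB.
  by rewrite comp_polyB.
- move=> _ _ [x [hx ->]] [y [hy ->]]; exists (x * y); split; first exact: sM.
  by rewrite comp_polyM.
Qed.


Lemma monom_slice c m (a : R) i : 0 <= c ->
  J (i%:R * c) a -> Rees_slice J (m%:R * c) (a ^+ m *: 'X^i).
Proof.
move=> hc ha n; rewrite coefZ coefXn.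
have hi : 0 <= i%:R * c by apply: mulr_ge0 => //; exact: ler0n.
case: eqP => [->|_]; last by rewrite mulr0; apply: J_0; do 2 apply: mulr_ge0 => //; exact: ler0n.
by rewrite mulr1 mulrCA; apply: J_exp.
Qed.

Lemma E_lemma c m q : (0 < m)%N -> 0 <= c ->
  intP (Rees_slice J c) q -> intP (PhiS c m) q.
Proof.
move=> hm hc hq; apply: (intP_trans (PhiS_subring m hc) hq) => y hy.
rewrite -[y]coefK poly_def; apply: (big_ind (intP (PhiS c m))).
- exact: (intP_0 (PhiS_subring m hc)).
- by move=> u v; apply: intP_add; apply: PhiS_subring.
move=> [i _] _ /=; set a := y`_i.
exists ('X^m - ((a ^+ m *: 'X^i) \Po 'X^m)%:P); split; first exact: monicXnsubC.
split.
  apply: subringP_XnC => //; first exact: PhiS_subring.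
  by exists (a ^+ m *: 'X^i); split => //; apply: monom_slice.
rewrite hornerD hornerN hornerXn hornerC exprZn comp_polyZ rmorphXn /= comp_polyX.
by rewrite -!exprM mulnC subrr.
Qed.

Definition Psi m (p : {poly R}) := \poly_(i < size p) p`_(i * m).

Lemma PsiK m : (0 < m)%N -> cancel (fun s : {poly R} => s \Po 'X^m) (Psi m).
Proof.
move=> hm s; apply/polyP => i; rewrite coef_poly.
have e : (s \Po 'X^m)`_(i * m) = s`_i.
  by rewrite coef_comp_poly_Xn // dvdn_mull ?dvdnn // mulnK.
case: ltnP => h; first by rewrite e.
by rewrite -e nth_default // (leq_trans h) // leq_pmulr.
Qed.

Lemma Psi0 m : Psi m 0 = 0.
Proof. by apply/polyP => i; rewrite /Psi coef_poly; case: ifP => _; rewrite ?coef0. Qed.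

Lemma pullback c m q : (0 < m)%N ->
  intP (PhiS c m) (q \Po 'X^m) -> intP (Rees_slice J (m%:R * c)) q.
Proof.
move=> hm [P [mP [SP P0]]].
pose Phi := comp_poly ('X^m : {poly R}).
have inj : injective Phi by exact: (can_inj (PsiK hm)).
pose P' := map_poly (Psi m) P.
have eP : map_poly Phi P' = P.
  apply/polyP => i; rewrite coef_map coef_map_id0 ?Psi0 //.
  by have [s [_ ->]] := SP i; rewrite /Phi PsiK.
exists P'; split; last split.
- rewrite monicE; apply/eqP; apply: (inj).
  rewrite -(lead_coef_map_inj inj); last by rewrite /Phi comp_poly0.
  transitivity (lead_coef P); first by congr lead_coef; exact: eP.
  rewrite (monicP mP).
  by rewrite /Phi -polyC1 comp_polyC.
- move=> i; rewrite coef_map_id0 ?Psi0 //.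
  by have [s [hs ->]] := SP i; rewrite PsiK.
- apply: (inj); rewrite /Phi -horner_map /= eP P0.
  by rewrite comp_poly0.
Qed.

End Rees.

Lemma intP_mono (K : comNzRingType) (S1 S2 : K -> Prop) x :
  (forall y, S1 y -> S2 y) -> intP S1 x -> intP S2 x.
Proof. by move=> h [P [mP [SP P0]]]; exists P; split => // ; split => // i; apply: h. Qed.

Section Main.
Variable R : comNzRingType.

Lemma F_lemma (J : rat -> R -> Prop) (hJ : QRees J) c m q : (0 < m)%N -> 0 <= c ->
  intP (Rees_slice J (m%:R * c)) q <-> intP (Rees_slice J c) (q \Po 'X^m).
Proof.
move=> hm hc; split.
- case=> P [mP [SP P0]].
  pose Phi := comp_poly ('X^m : {poly R}).
  exists (map_poly Phi P); split; first exact: monic_map.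
  split; first by move=> i; rewrite coef_map; apply: (slice_Phi hJ hm hc).
  by rewrite /Phi horner_map /= P0 comp_poly0.
- by move=> h; apply: pullback => //; apply: (E_lemma hJ hm hc h).
Qed.

Lemma same_mult (J1 J2 : rat -> R -> Prop) (h1 : QRees J1) (h2 : QRees J2) c m :
  (0 < m)%N -> 0 < c ->
  same_closure_at J1 J2 c <-> same_closure_at J1 J2 (m%:R * c).
Proof.
move=> hm hc0; have hc : 0 <= c by apply: ltW.
have hmc : 0 <= m%:R * c by apply: mulr_ge0 => //; exact: ler0n.
split.
- move=> hs q; rewrite /integral_over.
  split => h.
  - apply: (proj2 (F_lemma h2 _ hm hc)); apply/hs; exact: (proj1 (F_lemma h1 _ hm hc)).
  - apply: (proj2 (F_lemma h1 _ hm hc)); apply/hs; exact: (proj1 (F_lemma h2 _ hm hc)).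
- move=> hs.
  suff key : forall (Ja Jb : rat -> R -> Prop), QRees Ja -> QRees Jb ->
      same_closure_at Ja Jb (m%:R * c) ->
      forall q, intP (Rees_slice Ja c) q -> intP (Rees_slice Jb c) q.
    move=> q; split; first exact: key.
    apply: key => // q'; split; apply hs.
  move=> Ja Jb ha hb hab q hq.
  apply: (intP_mono (S1 := PhiS Jb c m)); first by move=> _ [s [hs' ->]]; apply: (slice_Phi hb hm hc).
  apply: (intP_trans (PhiS_subring hb m hc) (E_lemma ha hm hc hq)).
  move=> _ [s [hs' ->]].
  apply: (E_lemma hb hm hc); apply/(F_lemma hb) => //.
  apply/hab; apply: (intP_S (slice_subring ha hmc)).
  exact: hs'.
Qed.

End Main.

Lemma pos_int : forall z : int, 0 < z -> exists2 n : nat, (0 < n)%N & z = n%:Z.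
Proof. by case=> [n|n] //= h; exists n. Qed.

Lemma same_one (R : comNzRingType) (J1 J2 : rat -> R -> Prop)
    (h1 : QRees J1) (h2 : QRees J2) (b : rat) :
  0 < b -> same_closure_at J1 J2 1 <-> same_closure_at J1 J2 b.
Proof.
move=> hb.
have hnq : 0 < numq b by rewrite numq_gt0.
have [n hn en] := pos_int hnq.
have [d hd ed] := pos_int (denq_gt0 b).
have hd0 : (d%:R : rat) != 0 by rewrite pnatr_eq0 -lt0n.
pose c := (d%:R : rat)^-1.
have hc : 0 < c by rewrite invr_gt0 ltr0n.
have e1 : (1 : rat) = d%:R * c by rewrite /c mulfV.
have eb : b = n%:R * c by rewrite -[b]divq_num_den en ed mulrC.
rewrite e1 eb -!same_mult //.
Qed.

Theorem mainTheorem1 (k : fieldType) (R : comAlgType k)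
    (hR : noetherian R) (J1 J2 : rat -> R -> Prop)
    (h1 : QRees J1) (h2 : QRees J2) :
  [<-> QRees_equiv J1 J2;
       exists2 b : rat, 0 < b & same_closure_at J1 J2 b;
       forall b : rat, 0 < b -> same_closure_at J1 J2 b].
Proof.
tfae.
- by move=> h; exists 1 => //; exact: ltr01.
- move=> [b hb h] b' hb'.
  by apply/(same_one h1 h2 hb'); apply/(same_one h1 h2 hb).
- by move=> h; apply: h; exact: ltr01.
Qed.
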